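(* Let $\mathcal{E}_1$ be a finite multiset of real numbers, let $\epsilon\in(0,\tfrac14]$, and let $q(\mathcal{E}_1,\epsilon)$ be the $\lceil(1+|\mathcal{E}_1|)(1-\epsilon)\rceil$-th smallest element of $\mathcal{E}_1$. Let $\mathcal{E}_2$ be the multiset obtained from $\mathcal{E}_1$ by adding $t_l\ge 2$ elements that are less than or equal to $q(\mathcal{E}_1,\epsilon)$ and $t_r\ge t_l$ elements that are strictly greater than $q(\mathcal{E}_1,\epsilon)$. Then $q(\mathcal{E}_2,\epsilon)\ge q(\mathcal{E}_1,\epsilon)$, where $q(\mathcal{E}_2,\epsilon)$ is the $\lceil(1+|\mathcal{E}_2|)(1-\epsilon)\rceil$-th smallest element of $\mathcal{E}_2$.
   Context: Order statistics of multisets are counted with multiplicity; if the rank index $\lceil(1+|\mathcal{E}|)(1-\epsilon)\rceil$ exceeds $|\mathcal{E}|$, $q(\mathcal{E},\epsilon)$ is taken to be $+\infty$. *)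

(* Defs.v *)
From mathcomp Require Import all_boot all_order all_algebra.
From mathcomp Require Import reals constructive_ereal.
Set Implicit Arguments. Unset Strict Implicit. Unset Printing Implicit Defensive.
Import Order.TTheory GRing.Theory Num.Theory.
Local Open Scope ring_scope.

(* A finite multiset of reals is represented by a sequence (order irrelevant:
   only the sorted version is used). *)

Definition qrank (R : realType) (E : seq R) (eps : R) : int :=
  Num.ceil ((1 + (size E)%:R) * (1 - eps)).

(* q(E,eps): the qrank-th smallest element of E (1-based, with multiplicity);
   +oo if the rank index exceeds |E| (or is not positive). *)
Definition qeps (R : realType) (E : seq R) (eps : R) : \bar R :=
  let k := qrank E eps in
  if (0 < k) && (k <= (size E)%:Z) then
    ((nth 0 (sort <=%R E) (`|k|%N).-1)%:E)%E
  else (+oo)%E.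

(* Main.v *)
Require Import Defs.
From mathcomp Require Import all_boot all_order all_algebra.
From mathcomp Require Import reals constructive_ereal.
From mathcomp Require Import lra.
Import Order.TTheory GRing.Theory Num.Theory.
Local Open Scope ring_scope.

Section Aux.
Variable R : realType.

Lemma nth_ge_aux (s : seq R) (q : R) j : sorted <=%R s -> (j < size s)%N ->
  (count (fun x : R => (x < q)%R) s <= j)%N -> q <= nth 0 s j.
Proof.
move=> ss js hc; rewrite leNgt; apply/negP => hlt.
have hall : all (fun x : R => (x < q)%R) (take j.+1 s).
  apply/(all_nthP 0) => i; rewrite size_takel // => hi.
  rewrite nth_take //; apply: le_lt_trans hlt.
  apply: (sorted_leq_nth le_trans lexx) => //; rewrite ?inE.
  by rewrite ltnS in hi; exact: leq_ltn_trans hi js.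
move: hall; rewrite all_count => /eqP hc2.
move: hc; rewrite -[s in count _ s](cat_take_drop j.+1) count_cat hc2.
by rewrite size_takel // addSn ltnNge leq_addr.
Qed.

Lemma count_lt_aux (s : seq R) j : sorted <=%R s -> (j < size s)%N ->
  (count (fun x : R => (x < nth 0 s j)%R) s <= j)%N.
Proof.
move=> ss js.
rewrite -[s in count _ s](cat_take_drop j) count_cat.
have -> : count (fun x : R => (x < nth 0 s j)%R) (drop j s) = 0%N.
  apply/eqP; rewrite -leqn0 leqNgt -has_count; apply/hasPn => x /(nthP 0) [i].
  rewrite size_drop => hi <-; rewrite nth_drop -leNgt.
  apply: (sorted_leq_nth le_trans lexx) => //; rewrite ?inE //.
  - by rewrite -ltn_subRL.
  - exact: leq_addr.
rewrite addn0; apply: leq_trans (count_size _ _) _.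
by rewrite size_takel // ltnW.
Qed.

End Aux.

Theorem lemma1 (R : realType) (E1 Ll Lr : seq R) (eps : R) :
  0 < eps -> eps <= 1 / 4 ->
  (2 <= size Ll)%N -> (size Ll <= size Lr)%N ->
  all (fun x => (x%:E <= qeps E1 eps)%E) Ll ->
  all (fun x => (qeps E1 eps < x%:E)%E) Lr ->
  (qeps E1 eps <= qeps (E1 ++ Ll ++ Lr) eps)%E.
Proof.
move=> e0 e4 a2 ab hLl hLr.
have hk : forall (E : seq R) (k : int), (0 < k) -> (k <= (size E)%:Z) ->
   k = (`|k|%N.-1).+1%:Z /\ (`|k|%N.-1 < size E)%N.
  move=> E k k0 kE; case: k k0 kE => // n n0 nE.
  rewrite /= prednK //; split => //.
have hst : forall E : seq R, sorted <=%R (sort <=%R E).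
  by move=> E; apply: sort_sorted; exact: le_total.
move: hLl hLr; rewrite /qeps.
set k1 := qrank E1 eps.
case: ifP => [/andP[k1p k1n]|_]; last first.
  move=> _; case: Lr ab => [|x Lr] //=; first by rewrite leqNgt (leq_trans _ a2).
set k2 := qrank _ eps.
case: ifP => [/andP[k2p k2n]|_]; last by rewrite leey.
have [ek1 m1n] := hk _ _ k1p k1n.
have [ek2 m2n] := hk _ _ k2p k2n.
set m1 := (`|k1|.-1)%N in ek1 m1n *.
set m2 := (`|k2|.-1)%N in ek2 m2n *.
set q := nth 0 (sort <=%R E1) m1.
move=> hLl hLr; rewrite lee_fin.
have hL : forall x, x \in Ll -> x <= q by move=> x /(allP hLl); rewrite lee_fin.
have hR : forall x, x \in Lr -> q < x by move=> x /(allP hLr); rewrite lte_fin.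
have key : (m1 + size Ll <= m2)%N.
  have : k1 + (size Ll)%:Z <= k2.
    rewrite /k1 /k2 /qrank -(@intrKceil R (size Ll)%:Z) -ceilDrz ?intr_int //.
    apply: le_ceil.
    rewrite !size_cat !natrD.
    set n := (size E1)%:R; set a := (size Ll)%:R; set b := (size Lr)%:R.
    have hab : a <= b by rewrite ler_nat.
    have a0 : 0 <= a by [].
    have -> : ((size Ll)%:~R : R) = a by [].
    nra.
  by rewrite ek1 ek2 -PoszD lez_nat addSn ltnS.
apply: nth_ge_aux; first exact: hst.
- by rewrite size_sort.
rewrite count_sort !count_cat.
have c1 := @count_lt_aux R _ m1 (hst E1) ltac:(by rewrite size_sort).
rewrite -/q in c1.
rewrite count_sort in c1.
have c3 : count (fun x : R => (x < q)%R) Lr = 0%N.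
  apply/eqP; rewrite -leqn0 leqNgt -has_count; apply/hasPn => x /hR.
  by move=> hx; rewrite -leNgt ltW.
rewrite c3 addn0; apply: leq_trans key.
by rewrite leq_add // count_size.
Qed.
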